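(* Let $q$ be odd and $k,\ell\ge0$. If $\mathcal S_q$ is nonempty, then $D_k(a)=D_\ell(a)$ for all $a\in\mathcal S_q$ iff $k\equiv\pm\ell\pmod{q-1}$. Also, $D_k(b)=D_\ell(b)$ for all $b\in\mathcal N_q$ iff $k\equiv\pm\ell\pmod{q+1}$.
   Context: $D_k\in\mathbb Z[x]$: $D_0=2$, $D_1=x$, $D_{k+2}=xD_{k+1}-D_k$, viewed as functions on ${\mathbb F}_q$. $\mathcal S_q=\{a\in{\mathbb F}_q:a^2-4\text{ is a nonzero square in }{\mathbb F}_q\}$, $\mathcal N_q=\{a\in{\mathbb F}_q:a^2-4\text{ is a nonsquare in }{\mathbb F}_q\}$. *)

(* Defs.v *)
From HB Require Import structures.
From mathcomp Require Import all_boot all_order all_algebra all_field.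
Set Implicit Arguments. Unset Strict Implicit. Unset Printing Implicit Defensive.
Import GRing.Theory.
Local Open Scope ring_scope.

(* Dickson polynomials D_k (with parameter 1), evaluated at a point of a ring:
   D_0 = 2, D_1 = x, D_{k+2} = x D_{k+1} - D_k.
   Dpair k x = (D_k(x), D_{k+1}(x)). *)
Fixpoint Dpair (R : pzRingType) (k : nat) (x : R) : R * R :=
  match k with
  | 0%N => (2%:R, x)
  | k'.+1 => let p := Dpair k' x in (p.2, x * p.2 - p.1)
  end.

Definition D (R : pzRingType) (k : nat) (x : R) : R := (Dpair k x).1.

Definition nz_square (F : finFieldType) (a : F) : bool :=
  (a != 0) && [exists y : F, a == y ^+ 2].

Definition is_square (F : finFieldType) (a : F) : bool :=
  [exists y : F, a == y ^+ 2].

Definition Sq (F : finFieldType) : pred F := fun a => nz_square (a ^+ 2 - 4%:R).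
Definition Nq (F : finFieldType) : pred F := fun a => ~~ is_square (a ^+ 2 - 4%:R).

(* Main.v *)
Require Import Defs.
From HB Require Import structures.
From mathcomp Require Import all_boot all_order all_algebra all_field.
From mathcomp Require Import ring cyclic zify.
Set Implicit Arguments. Unset Strict Implicit. Unset Printing Implicit Defensive.
Import GRing.Theory.
Local Open Scope ring_scope.

Lemma Dpair_morph (R S : pzRingType) (f : {rmorphism R -> S}) k x :
  Dpair k (f x) = (f (Dpair k x).1, f (Dpair k x).2).
Proof.
elim: k => [|k IH] /=; first by rewrite rmorph_nat.
by rewrite IH /= rmorphB rmorphM.
Qed.

Lemma D_morph (R S : pzRingType) (f : {rmorphism R -> S}) k x :
  f (D k x) = D k (f x).
Proof. by rewrite /D Dpair_morph. Qed.

Lemma Dpair_uv (R : comPzRingType) (u v : R) k : u * v = 1 ->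
  Dpair k (u + v) = (u ^+ k + v ^+ k, u ^+ k.+1 + v ^+ k.+1).
Proof.
move=> uv; elim: k => [|k IH] /=; first by rewrite !expr0 !expr1.
rewrite IH /=; congr pair.
rewrite ![_ ^+ k.+2]exprS ![_ ^+ k.+1]exprS.
apply/eqP; rewrite -subr_eq0; apply/eqP.
transitivity ((u * v - 1) * (u ^+ k + v ^+ k)); first by ring.
by rewrite uv subrr mul0r.
Qed.

Lemma D_uv (R : comPzRingType) (u v : R) k : u * v = 1 ->
  D k (u + v) = u ^+ k + v ^+ k.
Proof. by move=> uv; rewrite /D Dpair_uv. Qed.

Lemma pow_sum_mod (R : comPzRingType) (u v : R) m k l : u * v = 1 -> u ^+ m = 1 ->
  (k = l %[mod m] \/ (k + l) = 0 %[mod m]) ->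
  u ^+ k + v ^+ k = u ^+ l + v ^+ l.
Proof.
move=> uv um.
have vm : v ^+ m = 1.
  by have := congr1 (fun x => x ^+ m) uv; rewrite /= exprMn um mul1r expr1n.
case=> e.
  by rewrite -(expr_mod k um) -(expr_mod k vm) e (expr_mod l um) (expr_mod l vm).
have ukl : u ^+ k * u ^+ l = 1 by rewrite -exprD -(expr_mod _ um) e mod0n expr0.
have vk : v ^+ k = u ^+ l.
  by rewrite -[RHS]mul1r -(expr1n _ k) -uv exprMn mulrC mulrA (mulrC _ (u ^+ k)) ukl mul1r.
have vl : v ^+ l = u ^+ k.
  by rewrite -[RHS]mul1r -(expr1n _ l) -uv exprMn mulrC mulrA ukl mul1r.
by rewrite vk vl addrC.
Qed.

Lemma pow_sum_prim (R : fieldType) (u : R) m k l : m.-primitive_root u ->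
  u ^+ k + u^-1 ^+ k = u ^+ l + u^-1 ^+ l ->
  (k = l %[mod m] \/ (k + l) = 0 %[mod m]).
Proof.
move=> pu.
have m0 : (0 < m)%N by exact: prim_order_gt0 pu.
have u0 : u != 0.
  apply/eqP=> u0; move: (prim_expr_order pu); rewrite u0 expr0n.
  by case: m m0 {pu} => // m' _ /eqP; rewrite eq_sym oner_eq0.
rewrite !exprVn => e.
set a := u ^+ k in e; set c := u ^+ l in e.
have a0 : a != 0 by rewrite expf_neq0.
have c0 : c != 0 by rewrite expf_neq0.
have : (a - c) * (1 - (a * c)^-1) = 0.
  rewrite invfM.
  apply/eqP; rewrite -subr_eq0 subr0; apply/eqP.
  transitivity (a + a^-1 - (c + c^-1)); last by rewrite e subrr.
  transitivity (a + a^-1 - (c + c^-1) + c^-1 * (1 - a * a^-1) + a^-1 * (c * c^-1 - 1)).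
    by ring.
  by rewrite !mulfV // subrr !mulr0 !addr0.
case/eqP; rewrite mulf_eq0 => /orP[|].
  by rewrite subr_eq0 (eq_prim_root_expr pu) => /eqP; left.
rewrite subr_eq0 eq_sym -[_ == 1](inj_eq (@invr_inj _)) invrK invr1 -exprD.
by rewrite -(prim_order_dvd pu) => /dvdnP[z ->]; right; rewrite modnMl mod0n.
Qed.
Lemma cardF_pow (F : finFieldType) : {p : nat & {n : nat | prime p /\ p \in [pchar F] /\ #|F| = (p ^ n)%N}}.
Proof.
have [p pr pc] := finPcharP F.
exists p, (logn p #|F|); split=> //; split=> //.
exact: (card_pprimeChar pc).
Qed.

Lemma two_neq0 (F : finFieldType) : odd #|F| -> 2%:R != 0 :> F.
Proof.
move=> oF; apply/negP => /eqP t0.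
have [p [n [pr [pc cF]]]] := cardF_pow F.
have c2 : 2 \in [pchar F] by apply/andP; split => //; apply/eqP.
have := pcharf_eq pc 2; rewrite c2 => /esym.
rewrite /= inE => /eqP p2; subst p.
move: oF; rewrite cF oddX /= orbF => /eqP n0; subst n.
by move: (finNzRing_gt1 F); rewrite cF.
Qed.

Section Ext.
Variables (F : finFieldType) (L : fieldType) (iota : {rmorphism F -> L}).
Local Notation q := #|F|.

Lemma pnat_q : [pchar L].-nat q.
Proof.
have [p [n [pr [pc cF]]]] := cardF_pow F.
have pcL : p \in [pchar L].
  apply/andP; split=> //; move: pc => /andP[_ /eqP pc0].
  by rewrite -(rmorph_nat iota) pc0 rmorph0.
by rewrite cF pnatX (pnatE _ pr) pcL.
Qed.

Lemma frobD (x y : L) : (x + y) ^+ q = x ^+ q + y ^+ q.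
Proof. exact: exprDn_pchar pnat_q. Qed.

Lemma iota_card x : iota x ^+ q = iota x.
Proof. by rewrite -rmorphXn expf_card. Qed.

Lemma fixed_image z : z ^+ q = z -> exists x, z = iota x.
Proof.
move=> zq.
have [/mapP[x _ ->]|zn] := boolP (z \in map iota (enum F)); first by exists x.
exfalso.
pose P : {poly L} := 'X^q - 'X.
have q1 : (1 < q)%N := finNzRing_gt1 F.
have sP : size P = q.+1.
  by rewrite size_polyDl size_polyXn // size_polyN size_polyX ltnS.
have P0 : P != 0 by rewrite -size_poly_eq0 sP.
suff : (size (z :: map iota (enum F)) < size P)%N.
  by rewrite sP /= size_map -cardE ltnn.
apply: max_poly_roots P0 _ _.
  apply/allP => w /predU1P[->|/mapP[x _ ->]];
    by rewrite rootE !hornerE ?zq ?iota_card subrr.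
by rewrite /= zn (map_inj_uniq (@fmorph_inj _ _ iota)) enum_uniq.
Qed.

End Ext.

Lemma prim_root_fin (K : finFieldType) : exists g : K, (#|K|.-1).-primitive_root g.
Proof.
have q1 : (1 < #|K|)%N := finNzRing_gt1 K.
have [||||g] := hasP (@has_prim_root K (#|K|.-1) (enum (predC1 (0 : K))) _ _ _ _).
- by rewrite -ltnS prednK // ltnW.
- apply/allP => x; rewrite mem_enum /= => x0.
  rewrite unity_rootE; apply/eqP; apply: (mulIf x0).
  by rewrite -exprSr prednK ?expf_card ?mul1r // ltnW.
- exact: enum_uniq.
- by rewrite -cardE cardC1.
by move=> _ pg; exists g.
Qed.

Section LL.
Variables (F : finFieldType) (d : F).
Hypothesis nsq : ~~ is_square d.
Let h : {poly F} := 'X^2 - d%:P.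
Lemma hmi : monic_irreducible_poly h.
Proof.
split; last exact: monicXnsubC.
apply: cubic_irreducible.
  by rewrite size_XnsubC.
move=> x; rewrite rootE !hornerE subr_eq0; apply/negP => /eqP hx.
by move: nsq; rewrite /is_square; case/existsP; exists x; rewrite hx.
Qed.
Definition LL : finFieldType := {poly %/ h with hmi}.
Definition iotaf (x : F) : LL := qpolyC h x.
HB.instance Definition _ := GRing.isZmodMorphism.Build F LL iotaf (qpolyC_is_zmod_morphism h).
HB.instance Definition _ := GRing.isMonoidMorphism.Build F LL iotaf (qpolyC_is_monoid_morphism h).
Definition iotaL : {rmorphism F -> LL} := iotaf.
Lemma cardLL : #|LL| = (#|F| ^ 2)%N.
Proof. by rewrite card_qfpoly size_XnsubC. Qed.
Definition sL : LL := 'qX.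
Lemma sL2 : sL ^+ 2 = iotaL d.
Proof.
have mk : mk_monic h = h by rewrite /mk_monic /h size_XnsubC // monicXnsubC.
rewrite expr2 /sL -in_qpolyM; apply: val_inj => /=.
rewrite /iotaf /= mk.
have -> : ('X * 'X : {poly F}) = 1 * h + d%:P by rewrite mul1r /h subrK expr2.
rewrite Pdiv.RingMonic.rmodp_addl_mul_small //; first by rewrite /h monicXnsubC.
by rewrite /h size_XnsubC // size_polyC; case: (d != 0).
Qed.
End LL.

Lemma prim_neq0 (K : fieldType) (z : K) n : n.-primitive_root z -> z != 0.
Proof.
move=> pz; have m0 : (0 < n)%N by exact: prim_order_gt0 pz.
apply/eqP=> z0; move: (prim_expr_order pz); rewrite z0 expr0n.
by case: n m0 {pz} => // m' _ /eqP; rewrite eq_sym oner_eq0.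
Qed.

Lemma q_facts (F : finFieldType) : odd #|F| -> (2 < #|F|)%N /\ ~~ odd #|F|.-1.
Proof.
move=> oF; have q1 := finNzRing_gt1 F.
split.
  by move: oF q1; case: #|F| => [|[|[|n]]].
by move: oF; rewrite -{1}(prednK (ltnW q1)) /=; case: (odd _).
Qed.

Lemma nonsq_exists (F : finFieldType) : odd #|F| -> exists d : F, ~~ is_square d.
Proof.
move=> oF; have [q2 qe] := q_facts oF.
have [g pg] := prim_root_fin F.
exists g; apply/negP => /existsP[y /eqP gy].
have y0 : y != 0.
  by apply/eqP => y0; move: gy (prim_neq0 pg); rewrite y0 expr0n /= => ->; rewrite eqxx.
have yq : y ^+ #|F|.-1 = 1.
  have q0 : (0 < #|F|)%N by apply: ltn_trans q2.
  by apply: (mulIf y0); rewrite -exprSr prednK ?expf_card ?mul1r.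
have [i yi] := prim_rootP pg yq.
have : g ^+ 1 == g ^+ (2 * i).
  by rewrite expr1 {1}gy yi -exprM mulnC.
rewrite (eq_prim_root_expr pg) => /eqP e.
have := congr1 odd e; rewrite !odd_mod ?(negbTE qe) //.
by rewrite oddM.
Qed.

Lemma decomp (K : fieldType) (a y : K) : 2%:R != 0 :> K -> y ^+ 2 = a ^+ 2 - 4%:R ->
  exists u v, [/\ u * v = 1, u + v = a & u - v = y].
Proof.
move=> t0 hy; set t := (2%:R : K)^-1.
have ht : t * 2%:R = 1 by rewrite mulVf.
exists ((a + y) * t), ((a - y) * t); split.
- transitivity (t ^+ 2 * (a ^+ 2 - 4%:R - y ^+ 2) + (t * 2%:R - 1) * (t * 2%:R + 1) + 1).
    by ring.
  by rewrite hy subrr mulr0 ht subrr mul0r !add0r.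
- transitivity (a + a * (t * 2%:R - 1)); first by ring.
  by rewrite ht subrr mulr0 addr0.
- transitivity (y + y * (t * 2%:R - 1)); first by ring.
  by rewrite ht subrr mulr0 addr0.
Qed.

Lemma fin_unit_pow (K : finFieldType) (u : K) : u != 0 -> u ^+ #|K|.-1 = 1.
Proof.
move=> u0; have q0 : (0 < #|K|)%N by apply: ltn_trans (finNzRing_gt1 K).
by apply: (mulIf u0); rewrite -exprSr prednK ?expf_card ?mul1r.
Qed.

Lemma part1_back (F : finFieldType) k l : odd #|F| ->
  (k = l %[mod #|F|.-1] \/ (k + l) = 0 %[mod #|F|.-1]) ->
  forall a : F, Sq a -> D k a = D l a.
Proof.
move=> oF e a /andP[_ /existsP[y /eqP hy]].
have [u [v [uv <- _]]] := decomp (two_neq0 oF) (esym hy).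
have u0 : u != 0 by apply/eqP => u0; move: uv; rewrite u0 mul0r => /eqP; rewrite eq_sym oner_eq0.
rewrite !D_uv //; exact: pow_sum_mod uv (fin_unit_pow u0) e.
Qed.

Lemma part1_fwd (F : finFieldType) k l : odd #|F| -> (exists a : F, Sq a) ->
  (forall a : F, Sq a -> D k a = D l a) ->
  (k = l %[mod #|F|.-1] \/ (k + l) = 0 %[mod #|F|.-1]).
Proof.
move=> oF [a0 /andP[y0 /existsP[y /eqP hy]]] H.
have [u [v [uv _ uvy]]] := decomp (two_neq0 oF) (esym hy).
have u0 : u != 0 by apply/eqP => u0; move: uv; rewrite u0 mul0r => /eqP; rewrite eq_sym oner_eq0.
have [g pg] := prim_root_fin F.
have g0 := prim_neq0 pg.
have gg : g * g^-1 = 1 by rewrite mulfV.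
have Sg : Sq (g + g^-1).
  apply/andP; split; last first.
    apply/existsP; exists (g - g^-1); apply/eqP.
    transitivity ((g - g^-1) ^+ 2 + 4%:R * (g * g^-1 - 1)); first by ring.
    by rewrite gg subrr mulr0 addr0.
  have -> : (g + g^-1) ^+ 2 - 4%:R = (g - g^-1) ^+ 2 + 4%:R * (g * g^-1 - 1) by ring.
  rewrite gg subrr mulr0 addr0 sqrf_eq0 subr_eq0; apply/eqP => gE.
  have : g ^+ 2 == 1 by rewrite expr2 {2}gE gg.
  rewrite -(prim_order_dvd pg) => /dvdnP[c c2].
  have u2 : u ^+ 2 = 1 by rewrite c2 mulnC exprM fin_unit_pow // expr1n.
  have : u = v.
    by rewrite -[v]mul1r -u2 expr2 -mulrA uv mulr1.
  move/eqP; rewrite -subr_eq0 uvy => /eqP y00.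
  by move: y0; rewrite hy y00 expr0n eqxx.
have := H _ Sg; rewrite !D_uv //.
exact: pow_sum_prim pg.
Qed.

Lemma part2_back (F : finFieldType) k l : odd #|F| ->
  (k = l %[mod #|F|.+1] \/ (k + l) = 0 %[mod #|F|.+1]) ->
  forall b : F, Nq b -> D k b = D l b.
Proof.
move=> oF e b nb.
set c := b ^+ 2 - 4%:R.
have nc : ~~ is_square c := nb.
pose i := iotaL nc; pose s : LL nc := sL nc.
have s2 : s ^+ 2 = i c := sL2 nc.
have t0 := two_neq0 oF.
pose t := i (2%:R^-1).
pose u := i b * t + s * t; pose v := i b * t - s * t.
have uv : u * v = 1.
  transitivity ((i b ^+ 2 - s ^+ 2) * t ^+ 2); first by rewrite /u /v; ring.
  rewrite s2 /t -!rmorphXn -rmorphB -rmorphM /c -(rmorph1 i); congr (i _).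
  transitivity ((2%:R * 2%:R^-1) ^+ 2 : F); first by ring.
  by rewrite mulfV // expr1n.
have uvb : u + v = i b.
  transitivity (i b * (i 2%:R * t)); first by rewrite rmorph_nat /u /v; ring.
  by rewrite /t -rmorphM mulfV // rmorph1 mulr1.
have sq : s ^+ #|F| = - s.
  have e2 : (s ^+ #|F|) ^+ 2 = s ^+ 2.
    by rewrite -exprM mulnC exprM s2 iota_card.
  have : (s ^+ #|F| - s) * (s ^+ #|F| + s) = 0.
    transitivity ((s ^+ #|F|) ^+ 2 - s ^+ 2); first by ring.
    by rewrite e2 subrr.
  case/eqP; rewrite mulf_eq0 => /orP[|]; last by rewrite addr_eq0 => /eqP.
  rewrite subr_eq0 => /eqP/(fixed_image i)[x sx].
  exfalso; move: (nc); rewrite /is_square; case/existsP; exists x; apply/eqP.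
  by apply: (fmorph_inj i); rewrite rmorphXn -sx.
have uq : u ^+ #|F| = v.
  rewrite /u (frobD i). rewrite !exprMn /t !iota_card sq /v; ring.
have u0 : u != 0 by apply/eqP => u0; move: uv; rewrite u0 mul0r => /eqP; rewrite eq_sym oner_eq0.
have uq1 : u ^+ #|F|.+1 = 1 by rewrite exprS mulrC uq mulrC.
apply: (fmorph_inj i); rewrite !D_morph -uvb !D_uv //.
exact: pow_sum_mod uv uq1 e.
Qed.

Lemma part2_fwd (F : finFieldType) k l : odd #|F| ->
  (forall b : F, Nq b -> D k b = D l b) ->
  (k = l %[mod #|F|.+1] \/ (k + l) = 0 %[mod #|F|.+1]).
Proof.
move=> oF H.
have [q2 _] := q_facts oF.
have [d nd] := nonsq_exists oF.
pose i := iotaL nd.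
have cL := cardLL nd.
have [g pg] := prim_root_fin (LL nd).
have pu : (#|F|.+1).-primitive_root (g ^+ #|F|.-1).
  have := exp_prim_root pg #|F|.-1.
  have -> : #|LL nd|.-1 = (#|F|.-1 * #|F|.+1)%N.
    rewrite cL; case: #|F| q2 => [|n] //= _; lia.
  by rewrite gcdnMr mulKn // -ltnS prednK // ltnW // ltnW.
set u := g ^+ #|F|.-1 in pu.
have u0 := prim_neq0 pu.
pose v := u^-1.
have uv : u * v = 1 by rewrite mulfV.
have uq : u ^+ #|F| = v.
  apply: (mulIf u0); rewrite -exprSr (prim_expr_order pu) mulrC /v mulfV //.
have vq : v ^+ #|F| = u by rewrite /v exprVn uq invrK.
have [b bE] : exists b, u + v = i b.
  apply: fixed_image; by rewrite (frobD i) uq vq addrC.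
have t0 := two_neq0 oF.
have nb : Nq b.
  apply/negP => /existsP[y /eqP hy].
  have e2 : (u - v) ^+ 2 = i y ^+ 2.
    transitivity ((u + v) ^+ 2 - 4%:R + 4%:R * (1 - u * v)); first by ring.
    by rewrite uv subrr mulr0 addr0 bE -(rmorph_nat i) -rmorphXn -rmorphB hy rmorphXn.
  have : exists z, u = i z.
    have : (u - v - i y) * (u - v + i y) = 0.
      transitivity ((u - v) ^+ 2 - i y ^+ 2); first by ring.
      by rewrite e2 subrr.
    case/eqP; rewrite mulf_eq0 => /orP[|] /eqP h.
      exists ((b + y) * 2%:R^-1).
      rewrite rmorphM fmorphV rmorphD -bE rmorph_nat.
      apply: (mulIf (x := 2%:R)); first by rewrite -(rmorph_nat i) fmorph_eq0.
      rewrite -mulrA mulVf ?mulr1; last by rewrite -(rmorph_nat i) fmorph_eq0.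
      transitivity (u + v + i y + (u - v - i y)); first by ring.
      by rewrite h addr0.
    exists ((b - y) * 2%:R^-1).
    rewrite rmorphM fmorphV rmorphB -bE rmorph_nat.
    apply: (mulIf (x := 2%:R)); first by rewrite -(rmorph_nat i) fmorph_eq0.
    rewrite -mulrA mulVf ?mulr1; last by rewrite -(rmorph_nat i) fmorph_eq0.
    transitivity (u + v - i y + (u - v + i y)); first by ring.
    by rewrite h addr0.
  case=> z uz.
  have uvE : u = v by rewrite -uq uz iota_card.
  have : u ^+ 2 == 1 by rewrite expr2 {2}uvE uv.
  rewrite -(prim_order_dvd pu) => /dvdn_leq; lia.
have := congr1 i (H b nb); rewrite !D_morph -bE !D_uv //.
exact: pow_sum_prim pu.
Qed.

Local Close Scope ring_scope.

Theorem lemma4p3 (F : finFieldType) (k l : nat) :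
  odd #|F| ->
  ((exists a : F, Sq a) ->
     ((forall a : F, Sq a -> D k a = D l a) <->
      (k = l %[mod #|F|.-1] \/ (k + l) = 0 %[mod #|F|.-1])))
  /\
  ((forall b : F, Nq b -> D k b = D l b) <->
   (k = l %[mod #|F|.+1] \/ (k + l) = 0 %[mod #|F|.+1])).
Proof.
move=> oF; split.
  move=> Se; split; [exact: part1_fwd | exact: part1_back].
split; [exact: part2_fwd | exact: part2_back].
Qed.
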